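(* Let $G$ be a finite abelian group of order $n$ with dual group $\hat G=\{\psi_1,\dots,\psi_n\}$. For $\chi\in\hat G^n$ define its entropy $H(\chi)=\frac1n\log\binom{n}{a_1,\dots,a_n}$, where $a_i$ is the number of coordinates of $\chi$ equal to $\psi_i$. Suppose $H\ge(\log n)^{-100}$. Then the number of $\chi\in\hat G^n$ with $H(\chi)\le H$ is at most \[ \exp\Big(Hn+O\Big(\frac{Hn\log\log n}{\log n}\Big)\Big), \] with an absolute implied constant.
   Context: $\binom{n}{a_1,\dots,a_n}=\frac{n!}{a_1!\cdots a_n!}$ is the multinomial coefficient. *)

(* Defs.v *)
From Stdlib Require Import Reals.
From mathcomp Require Import all_boot all_fingroup all_algebra all_field all_character.
Set Implicit Arguments. Unset Strict Implicit. Unset Printing Implicit Defensive.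

(* The dual group of a finite abelian group G is modelled by its irreducible
   characters (all linear for abelian G), indexed by Iirr G; #|Iirr G| = #|G|. *)
Section Entropy.
Variables (gT : finGroupType) (G : {group gT}).

Definition chiseq := {ffun 'I_#|G| -> Iirr G}.

Definition mult (chi : chiseq) (i : Iirr G) : nat := #|[set j | chi j == i]|.

Definition multinom (chi : chiseq) : nat :=
  ((#|G|)`! %/ \prod_(i : Iirr G) (mult chi i)`!)%N.

Definition entropy (chi : chiseq) : R :=
  Rmult (Rinv (INR #|G|)) (ln (INR (multinom chi))).

Definition count_entropy_le (H : R) : nat :=
  #|[set chi : chiseq | Rle_dec (entropy chi) H]|.
End Entropy.

(* Main.v *)
From Stdlib Require Import Reals Lra.
From mathcomp Require Import all_boot all_fingroup all_algebra all_field all_character.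
From mathcomp Require Import Rstruct.
Require Import Defs.
From mathcomp Require Import zify.
Import GRing.Theory Num.Theory.
Set Implicit Arguments. Unset Strict Implicit. Unset Printing Implicit Defensive.

Section Scalar.
Local Open Scope R_scope.

Lemma exp_le_mono x y : x <= y -> exp x <= exp y.
Proof. move=> h; case: (Rle_lt_or_eq_dec _ _ h) => [h'|->]; last lra.
by apply: Rlt_le; apply: exp_increasing. Qed.

Lemma ln_le_mono x y : 0 < x -> x <= y -> ln x <= ln y.
Proof. move=> h0 h; case: (Rle_lt_or_eq_dec _ _ h) => [h'|->]; last lra.
by apply: Rlt_le; apply: ln_increasing. Qed.

Lemma pow_exp x (m : nat) : exp x ^ m = exp (INR m * x).
Proof.
elim: m => [|m IH]; first by rewrite /= Rmult_0_l exp_0.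
rewrite [_ ^ _.+1]/= IH -exp_plus; congr exp; rewrite S_INR; ring.
Qed.

Lemma y_le_exp y : y <= exp (y - 1) * exp 1.
Proof. rewrite -exp_plus. have := exp_ineq1_le (y - 1). 
have -> : y - 1 + 1 = y by ring. 
have := exp_ineq1_le y. lra. Qed.

Lemma pow_le_fact (m : nat) : INR m ^ m <= INR (m`!) * exp (INR m).
Proof.
elim: m => [|m IH]; first by rewrite /= exp_0; lra.
have hm : 0 <= INR m by apply: pos_INR.
have key : (INR m + 1) ^ m <= INR m ^ m * exp 1.
  case: m IH hm => [|m] IH hm.
    rewrite /= Rmult_1_l; have := exp_ineq1_le 1; lra.
  have hpos : 0 < INR m.+1 by apply: lt_0_INR; apply/ltP.
  have h1 : INR m.+1 + 1 <= INR m.+1 * exp (/ INR m.+1).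
    have := exp_ineq1_le (/ INR m.+1).
    have e : INR m.+1 * (1 + / INR m.+1) = INR m.+1 + 1 by field; lra.
    move=> h; rewrite -e; apply: Rmult_le_compat_l; lra.
  apply: (Rle_trans _ ((INR m.+1 * exp (/ INR m.+1)) ^ m.+1)).
    apply: pow_incr; lra.
  rewrite Rpow_mult_distr pow_exp.
  have -> : INR m.+1 * / INR m.+1 = 1 by field; lra.
  lra.
rewrite factS mult_INR. rewrite S_INR /= exp_plus.
have hf : 0 <= INR m`! by apply: pos_INR.
have := exp_pos (INR m); have := exp_pos 1 => he1 hem.
have hp : 0 <= INR m ^ m by apply: pow_le.
apply: (Rle_trans _ ((INR m + 1) * (INR m ^ m * exp 1))).
  apply: Rmult_le_compat_l; lra.
have := Rmult_le_compat_l (INR m + 1) _ _ ltac:(lra) (Rmult_le_compat_r (exp 1) _ _ ltac:(lra) IH).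
nra.
Qed.


Lemma e_pow_le (k : nat) : exp 1 * INR k ^ k.+1 <= INR k.+1 ^ k.+1.
Proof.
case: k => [|k]; first by rewrite /= !Rmult_0_l Rmult_0_r; lra.
set x := INR k.+1.
have hx : 0 < x by apply: lt_0_INR; apply/ltP.
have hy : INR k.+2 = x + 1 by rewrite S_INR.
rewrite hy.
have h1 : x / (x + 1) <= exp (- / (x + 1)).
  have := exp_ineq1_le (- / (x + 1)).
  have -> : x / (x + 1) = 1 + - / (x + 1) by field; lra.
  done.
have h2 : (x / (x + 1)) ^ k.+2 <= exp (-1).
  apply: (Rle_trans _ (exp (- / (x + 1)) ^ k.+2)).
    apply: pow_incr; split; last done.
    apply: Rmult_le_pos; first lra. apply: Rlt_le; apply: Rinv_0_lt_compat; lra.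
  rewrite pow_exp.
  have -> : INR k.+2 * - / (x + 1) = -1 by rewrite hy; field; lra.
  lra.
have e3 : x ^ k.+2 = (x + 1) ^ k.+2 * (x / (x + 1)) ^ k.+2.
  rewrite -Rpow_mult_distr; congr pow; field; lra.
rewrite e3.
have hp : 0 < (x + 1) ^ k.+2 by apply: pow_lt; lra.
have hee : exp 1 * exp (-1) = 1.
  rewrite -exp_plus. have -> : 1 + -1 = 0 by ring. by rewrite exp_0.
have he : 0 < exp 1 by apply: exp_pos.
have := Rmult_le_compat_l ((x + 1) ^ k.+2) _ _ (Rlt_le _ _ hp) h2.
move=> h3.
apply: (Rle_trans _ (exp 1 * ((x + 1) ^ k.+2 * exp (-1)))).
  apply: Rmult_le_compat_l; lra.
have -> : exp 1 * ((x + 1) ^ k.+2 * exp (-1)) = (x + 1) ^ k.+2 * (exp 1 * exp (-1)) by ring.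
rewrite hee; lra.
Qed.

Lemma fact_le_pow (k : nat) :
  INR (k.+1)`! * exp (INR k.+1) <= exp 1 * INR k.+1 * INR k.+1 ^ k.+1.
Proof.
elim: k => [|k IH].
  rewrite /= !Rmult_1_r Rmult_1_l; lra.
rewrite factS mult_INR (S_INR k.+1) exp_plus.
set x := INR k.+1 in IH *.
have hx : 0 < x by apply: lt_0_INR; apply/ltP.
have he : 0 < exp 1 by apply: exp_pos.
have := e_pow_le k.+1; rewrite (S_INR k.+1) -/x => hk.
set f := INR (k.+1)`! in IH *.
set ex := exp x in IH *.
have h1 : (x + 1) * f * (ex * exp 1) = ((x + 1) * exp 1) * (f * ex) by ring.
rewrite h1.
apply: (Rle_trans _ (((x + 1) * exp 1) * (exp 1 * x * x ^ k.+1))).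
  apply: Rmult_le_compat_l; last done. nra.
have h2 : (x + 1) * exp 1 * (exp 1 * x * x ^ k.+1) = (x + 1) * exp 1 * (exp 1 * x ^ k.+2) by rewrite -(tech_pow_Rmult x k.+1); ring.
rewrite h2.
have hxe : 0 <= (x + 1) * exp 1 by nra.
have := Rmult_le_compat_l _ _ _ hxe hk. lra.
Qed.

Lemma le_exp_div (y : R) : 0 < y -> forall a, exp 1 * a <= y * exp (a / y).
Proof.
move=> hy a.
have := exp_ineq1_le (a / y - 1).
rewrite -[exp (a / y)](_ : exp (a / y - 1) * exp 1 = _); last first.
  by rewrite -exp_plus; congr exp; ring.
move=> h.
have he : 0 < exp 1 by apply: exp_pos.
have : y * (1 + (a / y - 1)) <= y * exp (a / y - 1) by apply: Rmult_le_compat_l; lra.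
have -> : y * (1 + (a / y - 1)) = a by field; lra.
nra.
Qed.

End Scalar.

Lemma fact_mul_le a S : (0 < a)%N -> (a`! * (S.+1)`! <= (a + S)`!)%N.
Proof.
move=> ha; elim: S => [|S IH]; first by rewrite addn0 muln1.
rewrite (factS S.+1) mulnCA addnS factS.
apply: (@leq_trans (S.+2 * (a + S)`!)); first by rewrite leq_mul2l IH orbT.
by rewrite leq_mul2r; apply/orP; right; lia.
Qed.

Lemma fact_support (I : Type) (r : seq I) (F : I -> nat) :
  ((\sum_(i <- r) (0 < F i : nat))`! * \prod_(i <- r) (F i)`! <= (\sum_(i <- r) F i)`!)%N.
Proof.
pose K (x1 x2 x3 : nat) := ((x1 <= x3) && (x1`! * x2 <= x3`!))%N.
suff : K (\sum_(i <- r) (0 < F i : nat))%N (\prod_(i <- r) (F i)`!)%N (\sum_(i <- r) F i)%N.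
  by case/andP.
apply: (big_rec3 K) => // i y1 y2 y3 _ /andP [h1 h2].
case: (posnP (F i)) => [->|hp].
  by rewrite /K /= !add0n fact0 mul1n h1.
rewrite /K.
have -> : (true + y1 = y1.+1)%N by [].
apply/andP; split; first by lia.
have -> : ((y1.+1)`! * ((F i)`! * y2) = (F i)`! * (y1.+1 * (y1`! * y2)))%N.
  by rewrite factS; lia.
apply: (@leq_trans ((F i)`! * (y3.+1)`!)); last exact: fact_mul_le.
rewrite leq_mul2l; apply/orP; right.
rewrite factS.
apply: (@leq_trans (y1.+1 * y3`!)); first by rewrite leq_mul2l h2 orbT.
by rewrite leq_mul2r ltnS h1 orbT.
Qed.

Ltac fixR := match goal with
  | |- @eq _ ?a ?b => change (@eq R a b)
  | |- Rle ?a ?b => change (Rle (a : R) (b : R))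
  end.

Section Count.
Variables (gT : finGroupType) (G : {group gT}).
Local Notation n := #|G|.
Local Notation T := (Iirr G).
Local Open Scope ring_scope.
Local Open Scope R_scope.

Lemma prod_mult (chi : chiseq G) (F : T -> R) :
  \prod_(j : 'I_n) F (chi j) = \prod_(i : T) (F i ^+ mult chi i)%R.
Proof.
rewrite (partition_big chi predT) //=.
apply: eq_bigr => i _.
rewrite (eq_bigr (fun _ => F i)); last by move=> j /eqP ->.
rewrite prodr_const /mult; congr (_ ^+ _); apply: eq_card => j; by rewrite !inE.
Qed.

Lemma sum_mult (chi : chiseq G) : (\sum_(i : T) mult chi i)%N = n.
Proof.
transitivity (\sum_(j : 'I_n) 1)%N; last by rewrite sum1_card card_ord.
rewrite [RHS](partition_big chi predT) //=.
apply: eq_bigr => i _; rewrite sum1_card /mult; apply: eq_card => j; by rewrite !inE.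
Qed.

Lemma mult_le (chi : chiseq G) i : (mult chi i <= n)%N.
Proof. by rewrite /mult -[X in (_ <= X)%N]card_ord max_card. Qed.

Definition typ (chi : chiseq G) : {ffun T -> 'I_n.+1} := [ffun i => inord (mult chi i)].

Lemma typE chi i : (typ chi i : nat) = mult chi i.
Proof. by rewrite ffunE inordK // ltnS mult_le. Qed.

Lemma sum_prod_chi (q : T -> R) :
  \sum_(chi : chiseq G) \prod_(j : 'I_n) q (chi j) = ((\sum_(i : T) q i) ^+ n)%R.
Proof.
have := bigA_distr_bigA (fun (j : 'I_n) (i : T) => q i).
move=> /= <-. by rewrite prodr_const card_ord.
Qed.


Definition pr (t : R) (x : nat) : R :=
  if x == 0%N then 1 - / t else / t * / t * (1 - / t) ^ x.-1.

Lemma pr_ge0 t x : 1 <= t -> 0 <= pr t x.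
Proof.
move=> ht; have h1 : 0 < / t by apply: Rinv_0_lt_compat; lra.
have h2 : / t <= 1 by rewrite -Rinv_1; apply: Rinv_le_contravar; lra.
rewrite /pr; case: eqP => _; first lra.
apply: Rmult_le_pos; first nra. apply: pow_le; lra.
Qed.

Definition geo (t : R) (i : nat) : R := / t * / t * (1 - / t) ^ i.

Lemma geom t m : t <> 0 ->
  \sum_(i < m) geo t i = / t * (1 - (1 - / t) ^ m).
Proof.
move=> ht; elim: m => [|m IH].
  rewrite big_ord0 /= -R0E. fixR. ring.
rewrite big_ord_recr /= IH -RplusE /geo. fixR. ring.
Qed.

Lemma sum_pr t m : 1 <= t -> \sum_(x < m.+1) pr t x <= 1.
Proof.
move=> ht; rewrite big_ord_recl.
rewrite (eq_bigr (fun i : 'I_m => geo t i)); last first.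
  by move=> i _; rewrite /pr /geo /=.
rewrite geom; last lra.
rewrite /pr /=.
have h1 : 0 < / t by apply: Rinv_0_lt_compat; lra.
have h2 : / t <= 1 by rewrite -Rinv_1; apply: Rinv_le_contravar; lra.
have h3 : 0 <= (1 - / t) ^ m by apply: pow_le; lra.
rewrite -RplusE. fixR. nra.
Qed.

Lemma sum_prior t m : 1 <= t ->
  \sum_(b : {ffun T -> 'I_m.+1}) \prod_(i : T) pr t (b i) <= 1.
Proof.
move=> ht.
have := bigA_distr_bigA (fun (i : T) (x : 'I_m.+1) => pr t x).
move=> /= <-.
apply/RleP; apply: prodr_ile1 => i _; apply/andP; split; apply/RleP.
  apply/RleP; apply: sumr_ge0 => x _; apply/RleP; exact: pr_ge0.
exact: sum_pr.
Qed.


Definition qf (b : {ffun T -> 'I_n.+1}) (i : T) : R := INR (b i) / INR n.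
Definition prior t (b : {ffun T -> 'I_n.+1}) : R := \prod_(i : T) pr t (b i).
Definition lik (b : {ffun T -> 'I_n.+1}) (chi : chiseq G) : R :=
  \prod_(j : 'I_n) qf b (chi j).
Definition Q t (b : {ffun T -> 'I_n.+1}) (chi : chiseq G) : R :=
  if (\sum_(i : T) (b i : nat) == n)%N then prior t b * lik b chi else 0.

Lemma qf_sum (b : {ffun T -> 'I_n.+1}) : (0 < n)%N -> (\sum_(i : T) (b i : nat))%N = n -> \sum_(i : T) qf b i = 1.
Proof.
move=> hn hb.
have -> : \sum_(i : T) qf b i = ((\sum_(i : T) INR (b i)) * / INR n)%R.
  by rewrite mulr_suml.
have -> : \sum_(i : T) INR (b i) = INR n.
  transitivity (INR (\sum_(i : T) (b i : nat))); last by rewrite hb.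
  rewrite INRE natr_sum; apply: eq_bigr => i _; by rewrite INRE.
rewrite -RmultE; apply: Rinv_r; apply: not_0_INR; lia.
Qed.

Lemma prior_ge0 t (b : {ffun T -> 'I_n.+1}) : 1 <= t -> 0 <= prior t b.
Proof. move=> ht; apply/RleP; apply: prodr_ge0 => i _; apply/RleP; exact: pr_ge0. Qed.

Lemma sumQ t : 1 <= t -> (0 < n)%N ->
  \sum_(chi : chiseq G) \sum_(b : {ffun T -> 'I_n.+1}) Q t b chi <= 1.
Proof.
move=> ht hn.
rewrite exchange_big /=.
apply: (Rle_trans _ (\sum_(b : {ffun T -> 'I_n.+1}) prior t b)); last first.
  exact: (sum_prior n ht).
apply/RleP; apply: ler_sum => b _; apply/RleP.
rewrite /Q; case: eqP => hb.
  rewrite -mulr_sumr /lik sum_prod_chi qf_sum // expr1n mulr1 /prior; apply: Rle_refl.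
rewrite big1 // -R0E; exact: prior_ge0.
Qed.

End Count.

Section G2.
Local Open Scope R_scope.

Lemma big_pow (L : R) : 163216 <= L -> L ^ 202 <= exp L.
Proof.
move=> hL.
have h1 : exp (L / 404) ^ 404 = exp L.
  rewrite pow_exp; congr exp. rewrite /Rdiv. 
  have -> : INR 404 = 404 by rewrite INR_IZR_INZ; reflexivity.
  field.
rewrite -h1.
have h2 : (L / 404) ^ 404 <= exp (L / 404) ^ 404.
  apply: pow_incr; split; first lra.
  have := exp_ineq1_le (L / 404); lra.
apply: (Rle_trans _ _ _ _ h2).
have -> : (404 = 2 * 202)%N by [].
rewrite pow_mult.
have -> : (L / 404) ^ 2 = L * (L / 163216) by rewrite /=; field.
rewrite Rpow_mult_distr.
have h3 : 1 <= (L / 163216) ^ 202.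
  apply: pow_R1_Rle. 
  apply: (Rmult_le_reg_r 163216); first lra.
  rewrite /Rdiv Rmult_assoc Rinv_l; lra.
have h4 : 0 <= L ^ 202 by apply: pow_le; lra.
nra.
Qed.


Lemma ln2_le1 : ln 2 <= 1.
Proof.
rewrite -[X in _ <= X]ln_exp; apply: ln_le_mono; first lra.
have := exp_ineq1_le 1; lra.
Qed.

Lemma s_bound (n s : nat) (X : R) : 0 < INR n -> 163216 <= ln (INR n) ->
  INR n / ln (INR n) ^ 100 <= X -> INR s`! <= 2 * exp X -> INR s * ln (INR n) <= 5 * X.
Proof.
set N := INR n; set L := ln N => hN hL hX hs.
have hNL : L ^ 202 <= N by rewrite -[N]exp_ln //; exact: big_pow.
have hL100 : 0 < L ^ 100 by apply: pow_lt; lra.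
set Y := N / L ^ 100 in hX.
have hNY : N = Y * L ^ 100 by rewrite /Y; field; lra.
have hY : L ^ 102 <= Y.
  have e : L ^ 202 = L ^ 102 * L ^ 100 by rewrite -pow_add.
  rewrite e hNY in hNL. apply: (Rmult_le_reg_r (L ^ 100)) => //.
have hL1 : L <= L ^ 102.
  have -> : (102 = 1 + 101)%N by []. rewrite pow_add /= Rmult_1_r.
  have : 1 <= L ^ 101 by apply: pow_R1_Rle; lra.
  nra.
have hs0 : 0 <= INR s by apply: pos_INR.
have hl2 := ln2_le1.
have hl20 : 0 < ln 2 by have := ln_lt_2; lra.
case: (Rle_lt_dec (INR s * INR s) N) => hsN.
  have hY0 : 0 <= Y by lra.
  have h1 : (INR s * L) * (INR s * L) <= X * X.
    have e : L ^ 102 = L ^ 100 * (L * L) by rewrite (_ : L * L = L ^ 2); [rewrite -pow_add | rewrite /=; ring].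
    have h2 : INR s * INR s * (L * L) <= N * (L * L) by apply: Rmult_le_compat_r; nra.
    have h3 : N * (L * L) = Y * L ^ 102 by rewrite hNY e; ring.
    nra.
  nra.
have hs1 : 0 < INR s by nra.
have hsn : (0 < s)%N.
  case: s hs0 hs1 {hsN hs} => [|s'] _ h; last done. by rewrite /= in h; lra.
have hlns : L < 2 * ln (INR s).
  have := ln_increasing _ _ hN hsN; rewrite ln_mult //; rewrite -/L; lra.
have hpow := pow_le_fact s.
have h1 : INR s ^ s <= 2 * exp (X + INR s).
  rewrite exp_plus.
  have := exp_pos (INR s) => he.
  have hf : 0 <= INR s`! by apply: pos_INR.
  apply: (Rle_trans _ _ _ hpow). 
  have := Rmult_le_compat_r (exp (INR s)) _ _ (Rlt_le _ _ he) hs. lra.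
have h2 : INR s * ln (INR s) <= ln 2 + (X + INR s).
  rewrite -ln_pow // -[X + INR s]ln_exp -ln_mult; try lra; last exact: exp_pos.
  apply: ln_le_mono => //; apply: pow_lt; lra.
nra.
Qed.

End G2.

Section G1.
Local Open Scope R_scope.

Lemma fac_ge_S (t N : R) (k : nat) : 2 <= t -> 0 < N ->
  (1 - / t) * (/ t) ^ 3 * ((1 - / t) * exp 1 * exp (- / t) * / N) ^ k.+1 * INR (k.+1)`!
  <= / t * / t * (1 - / t) ^ k * (INR k.+1 / N) ^ k.+1.
Proof.
move=> ht hN.
set q := 1 - / t; set u := / t; set x := INR k.+1.
have hu0 : 0 < u by apply: Rinv_0_lt_compat; lra.
have hut : u * t = 1 by rewrite /u; field; lra.
have hu1 : u <= / 2 by apply: Rinv_le_contravar; lra.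
have hq : 0 <= q <= 1 by rewrite /q -/u; lra.
have hx : 0 < x by apply: lt_0_INR; apply/ltP.
have hN' : 0 < / N by apply: Rinv_0_lt_compat.
rewrite (Rpow_mult_distr (q * exp 1 * exp (-u)) (/N)) (Rpow_mult_distr (q * exp 1) (exp (-u))) (Rpow_mult_distr q (exp 1)) !pow_exp.
have e1 : INR k.+1 * 1 = x by rewrite /x; ring.
rewrite e1 /Rdiv (Rpow_mult_distr x (/ N)).
set W := INR (k.+1)`! * exp x * exp (x * - u).
have hW : W <= t * x ^ k.+1.
  have h1 := fact_le_pow k. rewrite -/x in h1.
  have ht0 : 0 < t by lra.
  have h2 := le_exp_div ht0 x.
  have h3 : exp (x / t) * exp (x * - u) = 1.
    rewrite -exp_plus -[1]exp_0; congr exp; rewrite /u; field; lra.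
  have hpx : 0 < x ^ k.+1 by apply: pow_lt.
  have he : 0 < exp (x * - u) by apply: exp_pos.
  rewrite /W.
  apply: (Rle_trans _ (exp 1 * x * x ^ k.+1 * exp (x * - u))).
    by apply: Rmult_le_compat_r; lra.
  apply: (Rle_trans _ (t * exp (x / t) * x ^ k.+1 * exp (x * - u))).
    apply: Rmult_le_compat_r; first lra.
    apply: Rmult_le_compat_r; lra.
  have -> : t * exp (x / t) * x ^ k.+1 * exp (x * - u) = t * x ^ k.+1 * (exp (x / t) * exp (x * - u)) by ring.
  rewrite h3; lra.
have hqk : 0 <= q ^ k by apply: pow_le; lra.
have hNk : 0 < (/ N) ^ k.+1 by apply: pow_lt.
have hxk : 0 < x ^ k.+1 by apply: pow_lt.
have eL : q * u ^ 3 * (q ^ k.+1 * exp x * exp (x * - u) * (/ N) ^ k.+1) * INR (k.+1)`!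
        = (q * q * u ^ 3 * q ^ k * (/ N) ^ k.+1) * W.
  rewrite /W /=; ring.
rewrite eL.
have hC : 0 <= q * q * u ^ 3 * q ^ k * (/ N) ^ k.+1.
  apply: Rmult_le_pos; last lra. apply: Rmult_le_pos; last done.
  apply: Rmult_le_pos; first nra. apply: pow_le; lra.
apply: (Rle_trans _ ((q * q * u ^ 3 * q ^ k * (/ N) ^ k.+1) * (t * x ^ k.+1))).
  exact: Rmult_le_compat_l.
have -> : q * q * u ^ 3 * q ^ k * (/ N) ^ k.+1 * (t * x ^ k.+1)
  = (q * q) * (u * u * q ^ k * (x ^ k.+1 * (/ N) ^ k.+1)) * (u * t) by rewrite /=; ring.
rewrite hut Rmult_1_r.
have hR : 0 <= u * u * q ^ k * (x ^ k.+1 * (/ N) ^ k.+1).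
  apply: Rmult_le_pos; last nra. apply: Rmult_le_pos; nra.
have hqq : q * q <= 1 by nra.
nra.
Qed.


Definition c0 (t : R) : R := 1 - / t.
Definition c1 (t : R) : R := (/ t) ^ 3.
Definition c2 (t N : R) : R := (1 - / t) * exp 1 * exp (- / t) * / N.
Definition gl (t N : R) (a : nat) : R :=
  (c0 t * c1 t ^+ (0 < a)%N * c2 t N ^+ a * (a`!)%:R)%R.

Lemma gl_le t n a : 2 <= t -> (0 < n)%N -> gl t (INR n) a <= pr t a * (INR a / INR n) ^ a.
Proof.
move=> ht hn; rewrite /gl -!RpowE -!RmultE -INRE /c0 /c1 /c2.
have hN : 0 < INR n by apply: lt_0_INR; apply/ltP.
case: a => [|k].
  rewrite /pr /= !Rmult_1_r; lra.
have -> : (0 < k.+1)%N = true by [].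
rewrite /pr /= -[(/ t * (/ t * (/ t * 1)))]/((/ t) ^ 3) Rmult_1_r.
exact: fac_ge_S.
Qed.

End G1.

Section Count2.
Variables (gT : finGroupType) (G : {group gT}).
Local Notation n := #|G|.
Local Notation T := (Iirr G).
Local Open Scope ring_scope.
Local Open Scope R_scope.

Lemma prod_gl t N (a : T -> nat) :
  \prod_(i : T) gl t N (a i) =
  (c0 t ^+ #|T| * c1 t ^+ (\sum_(i : T) (0 < a i)%N)%N * c2 t N ^+ (\sum_(i : T) a i)%N
   * (\prod_(i : T) (a i)`!)%N%:R)%R.
Proof.
rewrite /gl !big_split /= prodr_const !prodrXr natr_prod //.
Qed.


Definition fac (t : R) (m a : nat) : R := pr t a * (INR a / INR m) ^ a.

Lemma Q_typ t (chi : chiseq G) :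
  Q t (typ chi) chi = \prod_(i : T) fac t n (mult chi i).
Proof.
rewrite /Q.
have -> : ((\sum_(i : T) (typ chi i : nat))%N == n) = true.
  rewrite (eq_bigr (fun i => mult chi i)); last by move=> i _; rewrite typE.
  by rewrite sum_mult eqxx.
rewrite /prior /lik prod_mult -big_split /=; apply: eq_bigr => i _.
by rewrite /fac /qf !typE -RpowE.
Qed.

Lemma gl_ge0 t N a : 2 <= t -> 0 < N -> 0 <= gl t N a.
Proof.
move=> ht hN; rewrite /gl -!RpowE -!RmultE -INRE /c0 /c1 /c2.
have hu0 : 0 < / t by apply: Rinv_0_lt_compat; lra.
have hu1 : / t <= / 2 by apply: Rinv_le_contravar; lra.
have hN' : 0 < / N by apply: Rinv_0_lt_compat.
have he1 := exp_pos 1. have he2 := exp_pos (- / t).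
apply: Rmult_le_pos; last exact: pos_INR.
apply: Rmult_le_pos; last (apply: pow_le; apply: Rmult_le_pos; [|lra]; apply: Rmult_le_pos; [|lra]; nra).
apply: Rmult_le_pos; first lra.
apply: pow_le; apply: pow_le; lra.
Qed.

Lemma Q_ge0 t b (chi : chiseq G) : 1 <= t -> 0 <= Q t b chi.
Proof.
move=> ht; rewrite /Q; case: eqP => _; last lra.
apply: Rmult_le_pos; first exact: prior_ge0.
apply/RleP; apply: prodr_ge0 => j _; apply/RleP; rewrite /qf.
apply: Rmult_le_pos; first exact: pos_INR.
have hn : (0 < n)%N := cardG_gt0 G.
apply: Rlt_le; apply: Rinv_0_lt_compat; apply: lt_0_INR; apply/ltP; exact: hn.
Qed.

Lemma chi_lower t (chi : chiseq G) : 2 <= t -> (0 < n)%N -> #|T| = n ->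
  c0 t ^ n * c1 t ^ (\sum_(i : T) (0 < mult chi i)%N)%N * c2 t (INR n) ^ n
    * INR (\prod_(i : T) (mult chi i)`!)%N
  <= \sum_(b : {ffun T -> 'I_n.+1}) Q t b chi.
Proof.
move=> ht hn hT.
have hN : 0 < INR n by apply: lt_0_INR; apply/ltP.
rewrite (bigD1 (typ chi)) //=.
have hr : 0 <= \sum_(b : {ffun T -> 'I_n.+1} | b != typ chi) Q t b chi.
  apply/RleP; apply: sumr_ge0 => b _; apply/RleP; apply: Q_ge0; lra.
rewrite -RplusE.
apply: (Rle_trans _ (Q t (typ chi) chi)); last first.
  have := Rplus_le_compat_l (Q t (typ chi) chi) _ _ hr; rewrite Rplus_0_r; exact.
rewrite Q_typ.
apply: (Rle_trans _ (\prod_(i : T) gl t (INR n) (mult chi i))); last first.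
  apply/RleP; apply: ler_prod => i _; apply/andP; split; apply/RleP.
    exact: gl_ge0.
  exact: gl_le.
rewrite prod_gl sum_mult hT -!RpowE -!RmultE -INRE.
apply: Rle_refl.
Qed.

End Count2.

Section G3.
Local Open Scope R_scope.

Lemma q_bound t : 2 <= t -> exp (- (2 / t)) <= 1 - / t.
Proof.
move=> ht.
have hu0 : 0 < / t by apply: Rinv_0_lt_compat; lra.
have hu1 : / t <= / 2 by apply: Rinv_le_contravar; lra.
have h1 := exp_ineq1_le (2 / t).
have h2 : exp (- (2 / t)) * exp (2 / t) = 1.
  rewrite -exp_plus. have -> : - (2 / t) + 2 / t = 0 by ring. by rewrite exp_0.
have h3 : 0 < exp (- (2 / t)) := exp_pos _.
have e : 2 / t = 2 * / t by [].
rewrite e in h1 h2.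
(* (1 - u)(1 + 2u) >= 1 *)
nra.
Qed.

Lemma lb_scalar (t N L X Dr Fr : R) (n s : nat) :
  2 <= t -> N = INR n -> 0 < N -> 0 < L -> 0 <= ln t -> 0 < Dr ->
  Fr / Dr <= 2 * exp X -> INR n ^ n <= Fr * exp (INR n) -> INR s * L <= 5 * X ->
  exp (- (X + ln 2 + 5 * N / t + 3 * (5 * X / L) * ln t))
  <= c0 t ^ n * c1 t ^ s * c2 t N ^ n * Dr.
Proof.
move=> ht eN hN hL hlt hD hFD hNF hs.
have ht0 : 0 < t by lra.
set q := 1 - / t.
have hq := q_bound ht. rewrite -/q in hq.
have hq0 : 0 < q by have := exp_pos (- (2 / t)); lra.
rewrite /c0 /c1 /c2 -/q.
rewrite (Rpow_mult_distr (q * exp 1 * exp (- / t)) (/ N)) (Rpow_mult_distr (q * exp 1) (exp (- / t)))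
        (Rpow_mult_distr q (exp 1)) !pow_exp -(pow_mult (/ t) 3 s) (pow_inv N n).
have eu : / t = exp (- ln t) by rewrite exp_Ropp exp_ln.
rewrite eu pow_exp -eN -eu.
have hNn : 0 < N ^ n by apply: pow_lt.
have hFr : 0 < Fr.
  have h := pow_lt _ n hN. rewrite eN in h. have := exp_pos (INR n). nra.
have A1 : exp (- (4 * N / t)) <= q ^ n * q ^ n.
  have : exp (- (2 / t)) ^ n <= q ^ n by apply: pow_incr; split; [apply: Rlt_le; apply: exp_pos|done].
  rewrite pow_exp -eN => h.
  have e : - (4 * N / t) = N * - (2 / t) + N * - (2 / t) by field; lra.
  rewrite e exp_plus.
  have := exp_pos (N * - (2 / t)); nra.
have A2 : exp (- (3 * (5 * X / L) * ln t)) <= exp (INR (3 * s)%coq_nat * - ln t).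
  apply: exp_le_mono.
  have hsX : INR s <= 5 * X / L.
    apply: (Rmult_le_reg_r L) => //. rewrite /Rdiv Rmult_assoc Rinv_l; lra.
  rewrite mult_INR. have -> : INR 3 = 3 by rewrite INR_IZR_INZ; reflexivity.
  nra.
have A3 : exp (- (X + ln 2)) <= exp N * Dr * / N ^ n.
  have h1 : exp (- (X + ln 2)) = / (2 * exp X).
    rewrite exp_Ropp exp_plus exp_ln; [by rewrite Rmult_comm|lra].
  rewrite h1.
  have hX2 : 0 < 2 * exp X by have := exp_pos X; lra.
  have h2 : Fr <= 2 * exp X * Dr.
    have := Rmult_le_compat_r Dr _ _ (Rlt_le _ _ hD) hFD. 
    have -> : Fr / Dr * Dr = Fr by field; lra. done.
  rewrite eN in hNn *.
  have hen : 0 < exp (INR n) := exp_pos _.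
  apply: (Rmult_le_reg_r (2 * exp X * (INR n ^ n))); first nra.
  have -> : / (2 * exp X) * (2 * exp X * INR n ^ n) = INR n ^ n by field; lra.
  have -> : exp (INR n) * Dr * / INR n ^ n * (2 * exp X * INR n ^ n) = exp (INR n) * (2 * exp X * Dr) by field; lra.
  apply: (Rle_trans _ _ _ hNF). rewrite Rmult_comm. apply: Rmult_le_compat_l; lra.
have A4 : 0 < exp (- (N / t)) := exp_pos _.
have e : - (X + ln 2 + 5 * N / t + 3 * (5 * X / L) * ln t) =
  - (4 * N / t) + - (3 * (5 * X / L) * ln t) + (N * - / t) + - (X + ln 2) by field; lra.
rewrite e !exp_plus.
have -> : q ^ n * exp (INR (3 * s)%coq_nat * - ln t) * (q ^ n * exp (N * 1) * exp (N * - / t) * / N ^ n) * Dr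
  = (q ^ n * q ^ n) * exp (INR (3 * s)%coq_nat * - ln t) * exp (N * - / t) * (exp N * Dr * / N ^ n).
  rewrite Rmult_1_r; ring.
have B1 := exp_pos (- (4 * N / t)).
have B2 := exp_pos (- (3 * (5 * X / L) * ln t)).
have B3 := exp_pos (- (X + ln 2)).
have B4 := exp_pos (N * - / t).
apply: Rmult_le_compat; try lra.
- apply: Rmult_le_pos; [apply: Rmult_le_pos|]; lra.
- apply: Rmult_le_compat; try lra.
  + apply: Rmult_le_pos; lra.
  + apply: Rmult_le_compat; lra.
Qed.


Lemma final_exp (N H : R) : 0 < N -> 163216 <= ln N -> / ln N ^ 100 <= H ->
  H * N + ln 2 + 5 * N / ln N ^ 101 + 3 * (5 * (H * N) / ln N) * ln (ln N ^ 101)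
  <= H * N + 1521 * (H * N * ln (ln N) / ln N).
Proof.
set L := ln N => hN hL hH.
have hL0 : 0 < L by lra.
have hNL : L ^ 202 <= N by rewrite -[N]exp_ln //; exact: big_pow.
have hL100 : 0 < L ^ 100 by apply: pow_lt.
have hlnL : 1 <= ln L.
  rewrite -[1]ln_exp; apply: ln_le_mono; first exact: exp_pos.
  have := exp_le_3; lra.
have ht : ln (L ^ 101) = 101 * ln L.
  rewrite ln_pow //; congr Rmult; rewrite INR_IZR_INZ; reflexivity.
rewrite ht.
set X := H * N.
have hX : N / L ^ 100 <= X.
  rewrite /X /Rdiv Rmult_comm; apply: Rmult_le_compat_r; lra.
set Y := X / L.
have eX : X = Y * L by rewrite /Y; field; lra.
have e101 : N / L ^ 101 = (N / L ^ 100) / L.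
  have -> : L ^ 101 = L ^ 100 * L by rewrite -[L in _ * L]pow_1 -pow_add.
  field; lra.
have hNt : N / L ^ 101 <= Y.
  rewrite e101 /Y /Rdiv; apply: Rmult_le_compat_r; last done.
  apply: Rlt_le; apply: Rinv_0_lt_compat; lra.
have hY1 : 1 <= Y.
  apply: (Rle_trans _ (N / L ^ 101)) => //.
  have e : L ^ 202 = L ^ 101 * L ^ 101 by rewrite -pow_add.
  have h1 : 1 <= L ^ 101 by apply: pow_R1_Rle; lra.
  have hp : 0 < L ^ 101 by apply: pow_lt.
  apply: (Rmult_le_reg_r (L ^ 101)) => //.
  rewrite /Rdiv Rmult_assoc Rinv_l; last lra. nra.
have hl2 := ln2_le1.
have e1 : 5 * N / L ^ 101 = 5 * (N / L ^ 101) by rewrite /Rdiv; ring.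
have e2 : 3 * (5 * X / L) * (101 * ln L) = 1515 * (Y * ln L) by rewrite /Y /Rdiv; ring.
have e3 : X * ln L / L = Y * ln L by rewrite /Y /Rdiv; ring.
rewrite e1 e2 e3.
nra.
Qed.

End G3.

Section Key.
Variables (gT : finGroupType) (G : {group gT}).
Local Open Scope ring_scope.
Local Open Scope R_scope.

Lemma key_chi (H t : R) (chi : chiseq G) :
  abelian G -> 2 <= t -> 0 <= ln t ->
  0 < INR #|G| -> 163216 <= ln (INR #|G|) ->
  INR #|G| / ln (INR #|G|) ^ 100 <= H * INR #|G| ->
  0 <= H * INR #|G| ->
  entropy chi <= H ->
  exp (- (H * INR #|G| + ln 2 + 5 * INR #|G| / t
          + 3 * (5 * (H * INR #|G|) / ln (INR #|G|)) * ln t))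
  <= \sum_(b : {ffun Iirr G -> 'I_#|G|.+1}) Q t b chi.
Proof.
move=> hab ht hlt hN hL hX hX0 hent.
have hn : (0 < #|G|)%N := cardG_gt0 G.
have hT := card_Iirr_abelian hab.
set X := H * INR #|G| in hX hX0 *.
pose D := (\prod_(i : Iirr G) (mult chi i)`!)%N.
pose s := (\sum_(i : Iirr G) (0 < mult chi i)%N)%N.
have hD : (0 < D)%N by apply: prodn_gt0 => i; exact: fact_gt0.
have hDr : 0 < INR D by apply: lt_0_INR; apply/ltP.
have hfs : (s`! * D <= #|G|`!)%N.
  have := fact_support (index_enum (Iirr G)) (mult chi).
  by rewrite sum_mult.
have hM : INR (multinom chi) <= exp X.
  case: (posnP (multinom chi)) => [->|hM0].
    rewrite /=; apply: Rlt_le; exact: exp_pos.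
  have hMr : 0 < INR (multinom chi) by apply: lt_0_INR; apply/ltP.
  rewrite -(exp_ln _ hMr); apply: exp_le_mono.
  move: hent; rewrite /entropy => hent.
  have e : ln (INR (multinom chi)) = INR #|G| * (/ INR #|G| * ln (INR (multinom chi))).
    field; lra.
  rewrite e /X Rmult_comm; apply: Rmult_le_compat_r; lra.
have hex : 1 <= exp X by have := exp_ineq1_le X; lra.
have hFD : INR (#|G|`!) / INR D <= 2 * exp X.
  have hdiv := divn_eq (#|G|`!) D.
  have hr := ltn_pmod (#|G|`!) hD.
  have e : INR (#|G|`!) = INR (multinom chi) * INR D + INR (#|G|`! %% D).
    by rewrite {1}hdiv plus_INR mult_INR.
  have hr' : INR (#|G|`! %% D) < INR D by apply: lt_INR; apply/ltP.
  rewrite e.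
  have -> : (INR (multinom chi) * INR D + INR (#|G|`! %% D)) / INR D
          = INR (multinom chi) + INR (#|G|`! %% D) / INR D by field; lra.
  have : INR (#|G|`! %% D) / INR D < 1.
    apply: (Rmult_lt_reg_r (INR D)) => //. rewrite /Rdiv Rmult_assoc Rinv_l; lra.
  lra.
have hsf : INR (s`!) <= 2 * exp X.
  apply: (Rle_trans _ _ _ _ hFD).
  have h := le_INR _ _ (elimT leP hfs). rewrite mult_INR in h.
  apply: (Rmult_le_reg_r (INR D)) => //.
  rewrite /Rdiv Rmult_assoc Rinv_l; last by apply: Rgt_not_eq; exact: hDr. by rewrite Rmult_1_r.
have hs := s_bound hN hL hX hsf.
have hL0 : 0 < ln (INR #|G|) by lra.
have hlb := lb_scalar ht (erefl (INR #|G|)) hN hL0 hlt hDr hFD (pow_le_fact #|G|) hs.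
apply: (Rle_trans _ _ _ hlb).
exact: chi_lower.
Qed.

End Key.

Local Open Scope ring_scope.
Local Open Scope R_scope.

Theorem lemma5p2 :
  exists (C : R) (N0 : nat),
    forall (gT : finGroupType) (G : {group gT}),
      abelian G -> (N0 <= #|G|)%N ->
      forall H : R,
        Rle (Rinv (pow (ln (INR #|G|)) 100)) H ->
        Rle (INR (count_entropy_le G H))
            (exp (Rplus (Rmult H (INR #|G|))
                  (Rmult C (Rdiv (Rmult (Rmult H (INR #|G|)) (ln (ln (INR #|G|))))
                                 (ln (INR #|G|)))))).
Proof.
have [N0 hN0] := INR_unbounded (exp 163216).
rewrite /Rgt in hN0.
exists 1521, N0 => gT G hab hn0 H hH.
have hNbig : (exp 163216 < INR #|G|).
  apply: (Rlt_le_trans _ _ _ hN0); apply: le_INR; exact/leP.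
have hN : (0 < INR #|G|) by have := exp_pos 163216; lra.
have hL : (163216 <= ln (INR #|G|)).
  have := ln_increasing _ _ (exp_pos _) hNbig; rewrite ln_exp; lra.
have hn : (0 < #|G|)%N := cardG_gt0 G.
pose L := ln (INR #|G|).
pose t := (L ^ 101).
have hL100 : (1 <= L ^ 100) by apply: pow_R1_Rle; rewrite /L; lra.
have ht : (2 <= t).
  rewrite /t (_ : 101 = 1 + 100)%N // pow_add /= Rmult_1_r.
  rewrite /L in hL100 *; nra.
have ht1 : (1 <= t) by lra.
have hlt : (0 <= ln t) by rewrite -ln_1; apply: ln_le_mono; lra.
have hH0 : (0 <= H).
  apply: Rle_trans hH; apply: Rlt_le; apply: Rinv_0_lt_compat; apply: pow_lt; lra.
have hX0 : (0 <= H * INR #|G|) by nra.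
have hX : (INR #|G| / ln (INR #|G|) ^ 100 <= H * INR #|G|).
  rewrite /Rdiv Rmult_comm; apply: Rmult_le_compat_r; lra.
pose E := (H * INR #|G| + ln 2 + 5 * INR #|G| / t
          + 3 * (5 * (H * INR #|G|) / ln (INR #|G|)) * ln t).
pose A := [set chi : chiseq G | Rle_dec (entropy chi) H].
have hkey : forall chi, chi \in A ->
    (exp (- E) <= \sum_(b : {ffun Iirr G -> 'I_#|G|.+1}) Q t b chi).
  move=> chi; rewrite inE; case: Rle_dec => // hent _.
  exact: key_chi.
have hsum := sumQ (G := G) ht1 hn.
have hcount : (INR #|A| * exp (- E) <= 1).
  rewrite INRE RmultE mulr_natl -sumr_const.
  apply: Rle_trans hsum.
  apply: (Rle_trans _ (\sum_(chi in A) \sum_(b : {ffun Iirr G -> 'I_#|G|.+1}) Q t b chi)).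
    apply/RleP; apply: ler_sum => chi hchi; apply/RleP; exact: hkey.
  rewrite [X in (_ <= X)](bigID (fun chi => chi \in A)) /=.
  have hr : (0 <= \sum_(chi | chi \notin A) \sum_(b : {ffun Iirr G -> 'I_#|G|.+1}) Q t b chi).
    apply/RleP; apply: sumr_ge0 => chi _; apply: sumr_ge0 => b _; apply/RleP; exact: Q_ge0.
  rewrite -RplusE.
  have := Rplus_le_compat_l (\sum_(chi in A) \sum_(b : {ffun Iirr G -> 'I_#|G|.+1}) Q t b chi) _ _ hr.
  rewrite Rplus_0_r; exact.
have hfin := final_exp hN hL hH.
rewrite /count_entropy_le -/A.
apply: (Rle_trans _ (exp E)).
  have hE := exp_pos E.
  have e : (exp (- E) * exp E = 1).
    rewrite -exp_plus. have -> : (- E + E = 0) by ring. by rewrite exp_0.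
  have hA : (0 <= INR #|A|) by apply: pos_INR.
  nra.
apply: exp_le_mono; rewrite /E /t /L; exact: hfin.
Qed.
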